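(* Every finite frame $(X,R)$ that is the image of the frame $(\mathbb{R},R_{>1})$ under a surjective p-morphism has small anti-clique overlaps.
   Context: $(\mathbb{R},R_{>1})$ is the frame with $xR_{>1}y$ iff $|x-y|>1$. A p-morphism $f:(Y,S)\to(X,R)$ is a map such that $ySy'$ implies $f(y)Rf(y')$, and whenever $f(y)Rx'$ there is $y'$ with $ySy'$ and $f(y')=x'$. An anti-clique in $(X,R)$ is a subset $\Sigma$ such that $xRy$ holds for no $x,y\in\Sigma$; a maximal anti-clique is one not properly contained in another anti-clique. $(X,R)$ has small anti-clique overlaps if any two distinct maximal anti-cliques have at most one element in common. *)

(* Defs.v *)
From Stdlib Require Import Reals List.
Open Scope R_scope.

Definition Rgt1 (x y : R) : Prop := Rabs (x - y) > 1.

Definition p_morphism {Y X : Type} (S : Y -> Y -> Prop) (Rx : X -> X -> Prop)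
  (f : Y -> X) : Prop :=
  (forall y y', S y y' -> Rx (f y) (f y')) /\
  (forall y x', Rx (f y) x' -> exists y', S y y' /\ f y' = x').

Definition surjective {Y X : Type} (f : Y -> X) : Prop :=
  forall x, exists y, f y = x.

Definition finite_type (X : Type) : Prop :=
  exists l : list X, forall x, In x l.

Definition anti_clique {X : Type} (Rx : X -> X -> Prop) (S : X -> Prop) : Prop :=
  forall x y, S x -> S y -> ~ Rx x y.

Definition maximal_anti_clique {X : Type} (Rx : X -> X -> Prop) (S : X -> Prop)
  : Prop :=
  anti_clique Rx S /\
  forall T : X -> Prop, anti_clique Rx T -> (forall x, S x -> T x) ->
    (forall x, T x -> S x).

Definition small_anti_clique_overlaps {X : Type} (Rx : X -> X -> Prop) : Prop :=
  forall S1 S2 : X -> Prop,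
    maximal_anti_clique Rx S1 -> maximal_anti_clique Rx S2 ->
    ~ (forall x, S1 x <-> S2 x) ->
    forall x y, S1 x -> S2 x -> S1 y -> S2 y -> x = y.

(* Main.v *)
Require Import Defs.
From Stdlib Require Import Reals List Lra Lia Classical.
Open Scope R_scope.

Definition nearp {X : Type} (f : R -> X) (t : R) (v : X) : Prop :=
  forall s, f s = v -> t - 1 <= s <= t + 1.

Definition is_glb' (E : R -> Prop) (m : R) : Prop :=
  (forall x, E x -> m <= x) /\ (forall m', (forall x, E x -> m' <= x) -> m' <= m).

Lemma abs_gt1 (x : R) : x > 1 \/ x < -1 -> Rabs x > 1.
Proof. unfold Rabs; destruct (Rcase_abs x); lra. Qed.

Lemma abs_gt1_inv (x : R) : Rabs x > 1 -> x > 1 \/ x < -1.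
Proof. unfold Rabs; destruct (Rcase_abs x); lra. Qed.

Lemma near_of_notR {X} (Rx : X -> X -> Prop) (f : R -> X) t v :
  p_morphism Rgt1 Rx f -> ~ Rx (f t) v -> nearp f t v.
Proof.
  intros [Hf Hb] H s Hs.
  destruct (Rle_dec (t - 1) s); destruct (Rle_dec s (t + 1)); try lra;
  exfalso; apply H; rewrite <- Hs; apply Hf; unfold Rgt1; apply abs_gt1; lra.
Qed.

Lemma notR_of_near {X} (Rx : X -> X -> Prop) (f : R -> X) t v :
  p_morphism Rgt1 Rx f -> nearp f t v -> ~ Rx (f t) v.
Proof.
  intros [Hf Hb] Hn H.
  destruct (Hb t v H) as [y' [Hy Hfy]].
  specialize (Hn y' Hfy). unfold Rgt1 in Hy. apply abs_gt1_inv in Hy. lra.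
Qed.

Lemma near_const {X} (Rx : X -> X -> Prop) (f : R -> X) t t' v :
  p_morphism Rgt1 Rx f -> f t = f t' -> nearp f t v -> nearp f t' v.
Proof.
  intros hp He Hn. apply (near_of_notR Rx); auto.
  rewrite <- He. apply notR_of_near; auto.
Qed.

Lemma Rx_sym {X} (Rx : X -> X -> Prop) (f : R -> X) u v :
  p_morphism Rgt1 Rx f -> surjective f -> Rx u v -> Rx v u.
Proof.
  intros [Hf Hb] hs H.
  destruct (hs u) as [s Hs]. subst u.
  destruct (Hb s v H) as [s' [Hr Hs']]. subst v.
  apply Hf. unfold Rgt1 in *. rewrite Rabs_minus_sym. exact Hr.
Qed.

Lemma irr_of_bound {X} (Rx : X -> X -> Prop) (f : R -> X) v A :
  p_morphism Rgt1 Rx f -> surjective f ->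
  (forall s, f s = v -> A <= s <= A + 1) -> ~ Rx v v.
Proof.
  intros [Hf Hb] hs H HR.
  destruct (hs v) as [s0 Hs0].
  assert (HR' : Rx (f s0) v) by (rewrite Hs0; exact HR).
  destruct (Hb s0 v HR') as [s' [Hr Hs']].
  pose proof (H s0 Hs0). pose proof (H s' Hs').
  unfold Rgt1 in Hr. apply abs_gt1_inv in Hr. lra.
Qed.

Lemma irr_near {X} (Rx : X -> X -> Prop) (f : R -> X) v a :
  p_morphism Rgt1 Rx f -> ~ Rx v v -> f a = v -> nearp f a v.
Proof.
  intros hp H Ha. apply (near_of_notR Rx); auto. rewrite Ha; auto.
Qed.

Lemma lub_ex (E : R -> Prop) a b :
  E a -> (forall x, E x -> x <= b) -> exists m, is_lub E m.
Proof.
  intros Ha Hb.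
  destruct (completeness E) as [m Hm].
  - exists b. intros x Hx. apply Hb; auto.
  - exists a; auto.
  - exists m; auto.
Qed.

Lemma glb_ex (E : R -> Prop) a b :
  E a -> (forall x, E x -> b <= x) -> exists m, is_glb' E m.
Proof.
  intros Ha Hb.
  destruct (lub_ex (fun x => E (- x)) (- a) (- b)) as [m [Hm1 Hm2]].
  - rewrite Ropp_involutive; auto.
  - intros x Hx. specialize (Hb _ Hx). lra.
  - exists (- m). split.
    + intros x Hx. assert (- x <= m). { apply Hm1. rewrite Ropp_involutive; auto. } lra.
    + intros m' Hm'. assert (m <= - m'). { apply Hm2. intros x Hx. specialize (Hm' _ Hx). lra. } lra.
Qed.

Lemma lub_approx (E : R -> Prop) m e :
  is_lub E m -> e > 0 -> exists s, E s /\ m - e < s.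
Proof.
  intros [H1 H2] He.
  destruct (classic (exists s, E s /\ m - e < s)) as [H|H]; auto.
  exfalso. assert (m <= m - e).
  { apply H2. intros x Hx. destruct (Rle_dec x (m - e)); auto.
    exfalso; apply H; exists x; split; auto; lra. }
  lra.
Qed.

Lemma glb_approx (E : R -> Prop) m e :
  is_glb' E m -> e > 0 -> exists s, E s /\ s < m + e.
Proof.
  intros [H1 H2] He.
  destruct (classic (exists s, E s /\ s < m + e)) as [H|H]; auto.
  exfalso. assert (m + e <= m).
  { apply H2. intros x Hx. destruct (Rle_dec (m + e) x); auto.
    exfalso; apply H; exists x; split; auto; lra. }
  lra.
Qed.

Definition BAD {X} (Rx : X -> X -> Prop) (f : R -> X) (w : X) : Prop :=
  exists c L Hc, ~ Rx w w /\ ~ Rx c c /\ is_glb' (fun s => f s = w) L /\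
    is_lub (fun s => f s = c) Hc /\ L + 1 < Hc /\ Hc < L + 2.

Definition Below {X} (f : R -> X) (q w : X) : Prop :=
  exists s, f s = q /\ forall a, f a = w -> s < a.

Lemma near_glb {X} (f : R -> X) t v L :
  nearp f t v -> is_glb' (fun s => f s = v) L -> t - 1 <= L.
Proof. intros Hn [_ H]. apply H. intros x Hx. specialize (Hn x Hx). lra. Qed.

Lemma near_lub {X} (f : R -> X) t v H :
  nearp f t v -> is_lub (fun s => f s = v) H -> H <= t + 1.
Proof. intros Hn [_ H2]. apply H2. intros x Hx. specialize (Hn x Hx). lra. Qed.

Lemma step {X} (Rx : X -> X -> Prop) (f : R -> X) w :
  p_morphism Rgt1 Rx f -> surjective f -> BAD Rx f w ->
  exists q, BAD Rx f q /\ Below f q w.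
Proof.
  intros hp hs [c [L [Hc [Iw [Ic [GL [LH [h1 h2]]]]]]]].
  pose proof hp as [Hf Hbk].
  destruct (hs w) as [a0 Ha0].
  destruct (hs c) as [b0 Hb0].
  pose proof (irr_near Rx f w a0 hp Iw Ha0) as Na0.
  pose proof (irr_near Rx f c b0 hp Ic Hb0) as Nb0.
  destruct (lub_ex (fun s => f s = w) a0 (a0 + 1)) as [Hw HW]; auto.
  { intros x Hx. specialize (Na0 x Hx). lra. }
  destruct (glb_ex (fun s => f s = c) b0 (b0 - 1)) as [Lc LC]; auto.
  { intros x Hx. specialize (Nb0 x Hx). lra. }
  assert (Uw : forall s, f s = w -> L <= s <= Hw).
  { intros s Hs. split. apply GL; auto. apply HW; auto. }
  assert (Uc : forall s, f s = c -> Lc <= s <= Hc).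
  { intros s Hs. split. apply LC; auto. apply LH; auto. }
  assert (a1 : Hw <= L + 1).
  { apply HW. intros s Hs. pose proof (irr_near Rx f w s hp Iw Hs) as Ns.
    pose proof (near_glb f s w L Ns GL). lra. }
  assert (a2 : Hc - 1 <= Lc).
  { pose proof (irr_near Rx f c b0 hp Ic Hb0) as Ns.
    assert (Hc <= b0 + 1) by (apply (near_lub f b0 c); auto).
    apply LC. intros s Hs. pose proof (irr_near Rx f c s hp Ic Hs) as Ns'.
    assert (Hc <= s + 1) by (apply (near_lub f s c); auto). lra. }
  assert (LHw : L <= Hw) by (pose proof (Uw a0 Ha0); lra).
  assert (Rwc : Rx w c).
  { destruct (glb_approx _ L ((Hc - L - 1)/2) GL) as [a1' [Ha1 Ha1']]; [lra|].
    destruct (lub_approx _ Hc ((Hc - L - 1)/2) LH) as [b1 [Hb1 Hb1']]; [lra|].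
    rewrite <- Ha1, <- Hb1. apply Hf. unfold Rgt1. apply abs_gt1. lra. }
  assert (b1 : Hw <= Hc - 1).
  { apply HW. intros a Ha. destruct (Rle_dec (Hc - 1) a) as [r|r]; [|lra].
    exfalso. apply (notR_of_near Rx f a c hp); [|rewrite Ha; auto].
    intros b Hb. pose proof (Uc b Hb). pose proof (Uw a Ha). lra. }
  pose (T1 := L + 1).
  assert (NT1w : nearp f T1 w).
  { intros s Hs. pose proof (Uw s Hs). unfold T1; lra. }
  assert (NT1c : nearp f T1 c).
  { intros s Hs. pose proof (Uc s Hs). unfold T1; lra. }
  set (n := f T1).
  assert (Un : forall s, f s = n -> Hc - 1 <= s <= L + 1).
  { intros s Hs.
    assert (E : f T1 = f s) by (rewrite Hs; reflexivity).
    pose proof (near_const Rx f T1 s w hp E NT1w) as N1.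
    pose proof (near_const Rx f T1 s c hp E NT1c) as N2.
    pose proof (near_glb f s w L N1 GL).
    pose proof (near_lub f s c Hc N2 LH). lra. }
  assert (In_ : ~ Rx n n).
  { apply (irr_of_bound Rx f n (Hc - 1) hp hs).
    intros s Hs. pose proof (Un s Hs). lra. }
  assert (LUBn : is_lub (fun s => f s = n) (L + 1)).
  { split. intros s Hs. pose proof (Un s Hs). lra.
    intros b Hb. apply Hb. reflexivity. }
  pose (S := Hw - 1).
  set (q := f S).
  assert (NSw : nearp f S w).
  { intros s Hs. pose proof (Uw s Hs). unfold S; lra. }
  assert (nNSn : ~ nearp f S n).
  { intros H. specialize (H T1 eq_refl). unfold S, T1 in *. lra. }
  assert (Uq : forall s, f s = q -> Hw - 1 <= s < L).
  { intros s Hs.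
    assert (E : f S = f s) by (rewrite Hs; reflexivity).
    pose proof (near_const Rx f S s w hp E NSw) as N1.
    assert (Hw <= s + 1) by (apply (near_lub f s w); auto).
    split; [lra|].
    destruct (Rlt_le_dec s L) as [r|r]; auto.
    exfalso. apply nNSn. apply (near_const Rx f s S n hp (eq_sym E)).
    intros s' Hs'. pose proof (Un s' Hs').
    pose proof (near_glb f s w L N1 GL). lra. }
  assert (Iq : ~ Rx q q).
  { apply (irr_of_bound Rx f q (Hw - 1) hp hs).
    intros s Hs. pose proof (Uq s Hs). lra. }
  assert (GLBq : is_glb' (fun s => f s = q) (Hw - 1)).
  { split. intros s Hs. pose proof (Uq s Hs). lra.
    intros m Hm. apply Hm. reflexivity. }
  assert (Bel : Below f q w).
  { exists S. split; [reflexivity|]. intros a Ha. pose proof (Uw a Ha). unfold S; lra. }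
  exists q. split; auto.
  destruct (Rlt_le_dec L Hw) as [cA|cB].
  - exists n, (Hw - 1), (L + 1). refine (conj Iq (conj In_ (conj GLBq (conj LUBn _)))). lra.
  - pose (P := L + (Hc - 1 - L) / 2).
    set (p := f P).
    assert (NPw : nearp f P w).
    { intros s Hs. pose proof (Uw s Hs). unfold P; lra. }
    assert (NPn : nearp f P n).
    { intros s Hs. pose proof (Un s Hs). unfold P; lra. }
    assert (nNPc : ~ nearp f P c).
    { intros H. pose proof (near_lub f P c Hc H LH). unfold P in *; lra. }
    assert (Up : forall s, f s = p -> L <= s < Hc - 1).
    { intros s Hs.
      assert (E : f P = f s) by (rewrite Hs; reflexivity).
      pose proof (near_const Rx f P s w hp E NPw) as N1.
      pose proof (near_const Rx f P s n hp E NPn) as N2.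
      pose proof (near_glb f s w L N1 GL).
      specialize (N2 T1 eq_refl). unfold T1 in *.
      split; [lra|].
      destruct (Rlt_le_dec s (Hc - 1)) as [r|r]; auto.
      exfalso. apply nNPc. apply (near_const Rx f s P c hp (eq_sym E)).
      intros b Hb. pose proof (Uc b Hb). lra. }
    assert (Ip : ~ Rx p p).
    { apply (irr_of_bound Rx f p L hp hs).
      intros s Hs. pose proof (Up s Hs). lra. }
    destruct (lub_ex (fun s => f s = p) P (Hc - 1)) as [Hp HP]; [reflexivity| |].
    { intros x Hx. pose proof (Up x Hx). lra. }
    assert (HpP : P <= Hp) by (apply HP; reflexivity).
    assert (Hp1 : Hp <= Hc - 1).
    { apply HP. intros x Hx. pose proof (Up x Hx). lra. }
    exists p, (Hw - 1), Hp. refine (conj Iq (conj Ip (conj GLBq (conj HP _)))). unfold P in *; lra.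
Qed.

Lemma below_trans {X} (f : R -> X) u q w : Below f u q -> Below f q w -> Below f u w.
Proof.
  intros [s1 [H1 H1']] [s2 [H2 H2']]. exists s1. split; auto.
  intros a Ha. specialize (H1' s2 H2). specialize (H2' a Ha). lra.
Qed.

Lemma below_irr {X} (f : R -> X) u : ~ Below f u u.
Proof. intros [s [H H']]. specialize (H' s H). lra. Qed.

Lemma descent {X} (Rx : X -> X -> Prop) (f : R -> X) :
  p_morphism Rgt1 Rx f -> surjective f ->
  forall k w, BAD Rx f w -> exists l, length l = k /\ NoDup l /\ forall u, In u l -> Below f u w.
Proof.
  intros hp hs k. induction k as [|k IH]; intros w Hw.
  - exists nil. split; auto. split. constructor. intros u [].
  - destruct (step Rx f w hp hs Hw) as [q [Hq Bq]].
    destruct (IH q Hq) as [l [Hl [Nl Bl]]].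
    exists (q :: l). split; [simpl; auto|]. split.
    + constructor; auto. intros Hin. apply (below_irr f q). apply Bl; auto.
    + intros u [Hu|Hu]. subst; auto. apply below_trans with q; auto.
Qed.

Lemma no_bad {X} (Rx : X -> X -> Prop) (f : R -> X) w :
  finite_type X -> p_morphism Rgt1 Rx f -> surjective f -> ~ BAD Rx f w.
Proof.
  intros [l0 Hl0] hp hs Hw.
  destruct (descent Rx f hp hs (S (length l0)) w Hw) as [l [Hl [Nl _]]].
  assert (length l <= length l0)%nat.
  { apply NoDup_incl_length; auto. intros u _. auto. }
  lia.
Qed.

Lemma config_bad {X} (Rx : X -> X -> Prop) (f : R -> X) w z x y a b :
  p_morphism Rgt1 Rx f -> surjective f ->
  ~ Rx w w -> ~ Rx z z -> ~ Rx x w -> ~ Rx x z -> ~ Rx y w -> ~ Rx y z -> x <> y ->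
  f a = w -> f b = z -> a + 1 < b -> BAD Rx f w.
Proof.
  intros hp hs Iw Iz xw xz yw yz xy Ha Hb Hab.
  pose proof (irr_near Rx f w a hp Iw Ha) as Na.
  pose proof (irr_near Rx f z b hp Iz Hb) as Nb.
  destruct (glb_ex (fun s => f s = w) a (a - 1)) as [L GL]; auto.
  { intros s Hs. specialize (Na s Hs). lra. }
  destruct (lub_ex (fun s => f s = z) b (b + 1)) as [Hz HZ]; auto.
  { intros s Hs. specialize (Nb s Hs). lra. }
  destruct (hs x) as [px Hpx]. destruct (hs y) as [py Hpy].
  assert (Hne : px <> py) by (intro E; subst; apply xy; auto).
  assert (N1 : nearp f px w) by (apply (near_of_notR Rx); auto; rewrite Hpx; auto).
  assert (N2 : nearp f px z) by (apply (near_of_notR Rx); auto; rewrite Hpx; auto).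
  assert (N3 : nearp f py w) by (apply (near_of_notR Rx); auto; rewrite Hpy; auto).
  assert (N4 : nearp f py z) by (apply (near_of_notR Rx); auto; rewrite Hpy; auto).
  pose proof (near_glb f px w L N1 GL). pose proof (near_lub f px z Hz N2 HZ).
  pose proof (near_glb f py w L N3 GL). pose proof (near_lub f py z Hz N4 HZ).
  assert (L <= a) by (apply GL; auto). assert (b <= Hz) by (apply HZ; auto).
  exists z, L, Hz. refine (conj Iw (conj Iz (conj GL (conj HZ _)))).
  split; [lra|].
  destruct (Rlt_le_dec px py); [lra|].
  destruct (Rle_lt_or_eq_dec _ _ r); [lra|]. subst; tauto.
Qed.

Lemma half {X} (Rx : X -> X -> Prop) (f : R -> X) (S1 S2 : X -> Prop) z x y :
  finite_type X -> p_morphism Rgt1 Rx f -> surjective f ->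
  maximal_anti_clique Rx S1 -> anti_clique Rx S2 ->
  S2 z -> ~ S1 z -> S1 x -> S2 x -> S1 y -> S2 y -> x <> y -> False.
Proof.
  intros hfin hp hs [A1 M1] A2 Hz Hnz H1x H2x H1y H2y xy.
  destruct (classic (exists w, S1 w /\ Rx w z)) as [[w [Hw Rwz]]|Hno].
  - destruct hp as [Hf Hb].
    destruct (hs w) as [a Ha].
    assert (Rx (f a) z) by (rewrite Ha; auto).
    destruct (Hb a z H) as [b [Hab Hfb]].
    unfold Rgt1 in Hab. apply abs_gt1_inv in Hab.
    assert (Iw : ~ Rx w w) by (apply A1; auto).
    assert (Iz : ~ Rx z z) by (apply A2; auto).
    destruct Hab as [Hab|Hab].
    +
      apply (no_bad Rx f z hfin (conj Hf Hb) hs).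
      apply (config_bad Rx f z w x y b a (conj Hf Hb) hs); auto; try lra; try (apply A1; now auto); try (apply A2; now auto).
    + apply (no_bad Rx f w hfin (conj Hf Hb) hs).
      apply (config_bad Rx f w z x y a b (conj Hf Hb) hs); auto; try lra; try (apply A1; now auto); try (apply A2; now auto).
  - apply Hnz. apply (M1 (fun u => S1 u \/ u = z)); auto.
    intros u v Hu Hv Huv.
    destruct Hu as [Hu|Hu]; destruct Hv as [Hv|Hv]; subst.
    + apply (A1 u v); auto.
    + apply Hno. exists u; auto.
    + apply Hno. exists v. split; auto. apply (Rx_sym Rx f); auto.
    + apply (A2 z z); auto.
Qed.

Theorem lemma5p7 (X : Type) (Rx : X -> X -> Prop) (f : R -> X) :
  finite_type X ->
  p_morphism Rgt1 Rx f ->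
  surjective f ->
  small_anti_clique_overlaps Rx.
Proof.
  intros hfin hp hs S1 S2 M1 M2 Hne x y H1x H2x H1y H2y.
  destruct (classic (x = y)) as [E|xy]; auto. exfalso.
  destruct (classic (exists z, S2 z /\ ~ S1 z)) as [[z [Hz Hnz]]|N1].
  - apply (half Rx f S1 S2 z x y); auto. apply M2.
  - destruct (classic (exists z, S1 z /\ ~ S2 z)) as [[z [Hz Hnz]]|N2].
    + apply (half Rx f S2 S1 z x y); auto. apply M1.
    + apply Hne. intro u. split; intro H.
      * destruct (classic (S2 u)); auto. exfalso; apply N2; eauto.
      * destruct (classic (S1 u)); auto. exfalso; apply N1; eauto.
Qed.
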